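(* Let $p^*\in(0,1)$ be the solution of $p^{(2-p)/(1-p)}=(1-p)^2$ and $\tau^*=(p^* )^{1/(1-p^* )}$. Let $\varepsilon\in[0,1)$ and $p=(1-\varepsilon)p^*$. Then for every integer $\ell\ge0$, \[ \int_{\tau^*}^1\frac{(1-(1-\varepsilon)t)^\ell}{t^{p^*}}\,dt\ \ge\ (1-p)^\ell . \] *)

(* Defs.v *)
From Stdlib Require Import Reals.
From Coquelicot Require Import Coquelicot.
Open Scope R_scope.

Definition is_pstar (p : R) : Prop :=
  0 < p < 1 /\ Rpower p ((2 - p) / (1 - p)) = (1 - p) ^ 2.

Definition tau_of (p : R) : R := Rpower p (1 / (1 - p)).

(* Main.v *)
Require Import Defs.
From Stdlib Require Import Reals Lra.
From Coquelicot Require Import Coquelicot.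
Open Scope R_scope.
Lemma pow_int (a tau : R): 0<tau -> tau<=1 -> a+1 <> 0 ->
  is_RInt (fun t => Rpower t a) tau 1 ((1 - Rpower tau (a+1))/(a+1)).
Proof.
intros Ht Ht1 Ha.
replace ((1 - Rpower tau (a+1))/(a+1)) with
  (minus ((fun t => Rpower t (a+1)/(a+1)) 1) ((fun t => Rpower t (a+1)/(a+1)) tau)).
2:{ unfold minus, plus, opp; simpl. unfold Rpower at 1. rewrite ln_1, Rmult_0_r, exp_0. field; auto. }
apply (is_RInt_derive (fun t => Rpower t (a+1)/(a+1))).
- intros x Hx. rewrite Rmin_left in Hx by lra. rewrite Rmax_right in Hx by lra.
  unfold Rpower. auto_derive. lra.
  replace ((a + 1) * ln x) with (a * ln x + ln x) by ring. rewrite exp_plus, exp_ln by lra. field. split; lra.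
- intros y Hx. rewrite Rmin_left in Hx by lra. rewrite Rmax_right in Hx by lra.
  apply (ex_derive_continuous (fun t => Rpower t a)). unfold Rpower. auto_derive. lra.
Qed.

Lemma tang1 (x c : R) (n:nat): 0<=x -> 0<=c ->
  c^(S n) + INR (S n) * c^n * (x-c) <= x^(S n).
Proof.
intros Hx Hc. induction n as [|n IH].
- simpl. lra.
- set (k := INR (S n)) in *. set (u := c^n) in *.
  assert (Hk : 0 <= k) by apply pos_INR.
  assert (Hu : 0 <= u) by (apply pow_le; auto).
  assert (E : INR (S (S n)) = k + 1) by (unfold k; rewrite S_INR; ring).
  rewrite E. change (c^(S (S n))) with (c * c^(S n)). change (c^(S n)) with (c*u).
  change (x^(S (S n))) with (x * x^(S n)).
  fold u in IH. change (c^(S n)) with (c*u) in IH.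
  assert (H1 : x*(c*u + k*u*(x-c)) <= x * x^(S n)) by (apply Rmult_le_compat_l; lra).
  assert (H2 : 0 <= k*u*((x-c)*(x-c))).
  { apply Rmult_le_pos. apply Rmult_le_pos; lra. apply Rle_0_sqr. }
  assert (E2 : x*(c*u + k*u*(x-c)) = c*(c*u) + (k+1)*(c*u)*(x-c) + k*u*((x-c)*(x-c))) by ring.
  lra.
Qed.

Lemma tang (x c : R) (n:nat): 0<=x -> 0<=c ->
  c^n + INR n * c^(pred n) * (x-c) <= x^n.
Proof.
intros Hx Hc. destruct n. simpl; lra. apply tang1; auto.
Qed.

Theorem mainTheorem12 (pstar eps : R) (l : nat) :
  is_pstar pstar -> 0 <= eps < 1 ->
  RInt (fun t => (1 - (1 - eps) * t) ^ l / Rpower t pstar) (tau_of pstar) 1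
    >= (1 - (1 - eps) * pstar) ^ l.
Proof.
intros [[Hp0 Hp1] Hps] He.
set (p := pstar) in *. set (a := 1 - eps). set (tau := tau_of p).
set (c := 1 - a*p).
assert (Ha : 0 < a <= 1) by (unfold a; lra).
assert (Hc : 0 < c) by (unfold c; nra).
assert (Htau0 : 0 < tau) by (unfold tau, tau_of, Rpower; apply exp_pos).
assert (Htau1 : tau <= 1).
{ unfold tau, tau_of, Rpower. apply Rlt_le, (Rlt_le_trans _ (exp 0)); [apply exp_increasing | rewrite exp_0; lra].
  assert (ln p < 0) by (rewrite <- ln_1; apply ln_increasing; lra).
  assert (0 < 1/(1-p)) by (apply Rdiv_lt_0_compat; lra). pose proof (Rmult_lt_compat_l (1/(1-p)) (ln p) 0 H0 H). lra. }
assert (T1 : Rpower tau (1-p) = p).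
{ unfold tau, tau_of. rewrite Rpower_mult. replace (1/(1-p)*(1-p)) with 1 by (field; lra).
  apply Rpower_1; lra. }
assert (T2 : Rpower tau (2-p) = (1-p)^2).
{ unfold tau, tau_of. rewrite Rpower_mult. rewrite <- Hps. f_equal. field. lra. }
assert (I1 : is_RInt (fun t => Rpower t (-p)) tau 1 1).
{ assert (Hv : (1 - Rpower tau (-p+1))/(-p+1) = 1).
  { replace (-p+1) with (1-p) by ring. rewrite T1. field. lra. }
  pose proof (pow_int (-p) tau Htau0 Htau1) as H. rewrite Hv in H. apply H. lra. }
assert (I2 : is_RInt (fun t => Rpower t (1-p)) tau 1 p).
{ assert (Hv : (1 - Rpower tau (1-p+1))/(1-p+1) = p).
  { replace (1-p+1) with (2-p) by ring. rewrite T2. field. lra. }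
  pose proof (pow_int (1-p) tau Htau0 Htau1) as H. rewrite Hv in H. apply H. lra. }
set (A := c^l + INR l * c^(pred l) * (1-c)).
set (B := - (INR l * c^(pred l) * a)).
set (g := fun t => A * Rpower t (-p) + B * Rpower t (1-p)).
assert (Hg : is_RInt g tau 1 (A*1 + B*p)).
{ pose proof (is_RInt_plus _ _ _ _ _ _ (is_RInt_scal _ _ _ A _ I1) (is_RInt_scal _ _ _ B _ I2)) as H.
  eapply is_RInt_ext; [|exact H]. intros; reflexivity. }
assert (E : c^l = A*1 + B*p) by (unfold A, B, c; ring).
rewrite E, <- (is_RInt_unique g tau 1 _ Hg).
apply Rle_ge. apply RInt_le; auto.
- exists (A*1+B*p); auto.
- apply (ex_RInt_continuous (V:=R_CompleteNormedModule)). intros z Hz.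
  rewrite Rmin_left in Hz by lra. rewrite Rmax_right in Hz by lra.
  apply (ex_derive_continuous (fun t => (1 - (1 - eps) * t) ^ l / Rpower t pstar)).
  unfold Rpower. auto_derive. split. lra. split; auto. apply Rgt_not_eq, exp_pos.
- intros x Hx.
  unfold g. rewrite Rpower_Ropp.
  replace (1-p) with (1 + -p) by ring. rewrite Rpower_plus, Rpower_1 by lra.
  rewrite Rpower_Ropp.
  assert (Hr : 0 < / Rpower x p) by (apply Rinv_0_lt_compat; unfold Rpower; apply exp_pos).
  unfold Rdiv.
  replace (A * / Rpower x p + B * (x * / Rpower x p)) with ((A + B*x) * / Rpower x p) by ring.
  apply Rmult_le_compat_r; [lra|].
  fold a.
  replace (A + B*x) with (c^l + INR l * c^(pred l) * ((1 - a*x) - c)) by (unfold A, B; ring).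
  apply tang; nra.
Qed.
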